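(* Consider the exponential-push content-access game described in the context, with $\lambda_{ps}(G)>\lambda_{ps}(B)>0$, $\pi_B=1-\pi_G>0$, and a common threshold $0\le\alpha<N$ of the other users. Let $\beta_1^*(\alpha)$ denote a maximizer of $U(\alpha,\beta)$ over $\beta\in[0,\alpha]$. Then: (i) if $\frac{\pi_G}{\pi_B} < \frac{\lambda_{ps}(G)}{\lambda_{ps}(B)}$, then $\beta^*_1(\alpha)=\alpha$; (ii) if $\frac{\pi_G}{\pi_B} > \frac{\lambda_{ps}(G)}{\lambda_{ps}(B)}$, then $\beta^*_1(\alpha)=0$; (iii) if $\frac{\pi_G}{\pi_B} = \frac{\lambda_{ps}(G)}{\lambda_{ps}(B)}$, then every $\beta\in[0,\alpha]$ is optimal.
   Context: A content has a type $\theta\in\{G,B\}$ (good/bad) and lifetime $\tau>0$; users believe it is good with probability $\pi_G$ and bad with probability $\pi_B=1-\pi_G$. Users use threshold strategies on the viewcount: all users other than a tagged user access the content once the viewcount reaches $\alpha$; the tagged user uses threshold $\beta$. Exponential push dynamics with $N>0$ potential push users: for type $\theta$ with push rate $\lambda_{ps}(\theta)>0$ and pull rate $\lambda_{pu}>0$, let $t_\alpha(\theta)=-\frac{1}{\lambda_{ps}(\theta)}\log(1-\alpha/N)$, and the viewcount is $X(t,\theta)=N(1-e^{-\lambda_{ps}(\theta)t})$ for $0\le t\le t_\alpha(\theta)$ and $X(t,\theta)=N(1-e^{-\lambda_{ps}(\theta)t})+\lambda_{pu}(t-t_\alpha(\theta))$ for $t\ge t_\alpha(\theta)$. For $\beta\ge0$,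 $t_\beta(\theta)=\min\{t\ge0: X(t,\theta)=\beta\}$. The tagged user's utility is $U(\alpha,\beta)=\pi_G(\tau-t_\beta(G))-\pi_B(\tau-t_\beta(B))$. *)

(* Defs.v *)
From Stdlib Require Import Reals.
From Coquelicot Require Import Coquelicot.
Open Scope R_scope.

Definition t_alpha (N lps alpha : R) : R := - / lps * ln (1 - alpha / N).

Definition viewcount (N lps lpu alpha t : R) : R :=
  if Rle_dec t (t_alpha N lps alpha) then N * (1 - exp (- lps * t))
  else N * (1 - exp (- lps * t)) + lpu * (t - t_alpha N lps alpha).

(* t_beta(theta) = min { t >= 0 : X(t, theta) = beta }, rendered as the
   infimum of that set (which equals the minimum whenever it exists). *)
Definition t_beta (N lps lpu alpha beta : R) : R :=
  real (Glb_Rbar (fun t => 0 <= t /\ viewcount N lps lpu alpha t = beta)).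

Definition utility (tau piG N lG lB lpu alpha beta : R) : R :=
  piG * (tau - t_beta N lG lpu alpha beta)
  - (1 - piG) * (tau - t_beta N lB lpu alpha beta).

Definition is_maximizer (f : R -> R) (alpha beta : R) : Prop :=
  0 <= beta <= alpha /\ forall b, 0 <= b <= alpha -> f b <= f beta.

(* Main.v *)
Require Import Defs.
From Stdlib Require Import Reals Lra.
From Coquelicot Require Import Coquelicot.
Open Scope R_scope.

Definition LL (N b : R) := - ln (1 - b / N).

Lemma t_beta_eq (N l lpu alpha b : R) : 0 < N -> 0 < l -> 0 < lpu ->
  0 <= b -> b <= alpha -> alpha < N ->
  t_beta N l lpu alpha b = LL N b / l.
Proof.
  intros HN Hl Hlpu Hb0 Hba HaN.
  assert (Hx : 0 < 1 - b / N).
  { assert (b / N < 1) by (apply Rmult_lt_reg_r with N; [lra|]; field_simplify; lra). lra. }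
  assert (Hxa : 0 < 1 - alpha / N).
  { assert (alpha / N < 1) by (apply Rmult_lt_reg_r with N; [lra|]; field_simplify; lra). lra. }
  assert (Hxx : 1 - alpha / N <= 1 - b / N).
  { assert (b / N <= alpha / N) by (unfold Rdiv; apply Rmult_le_compat_r;
      [left; apply Rinv_0_lt_compat; lra | lra]). lra. }
  assert (Hx1 : 1 - b / N <= 1).
  { assert (0 <= b / N) by (unfold Rdiv; apply Rmult_le_pos; [lra|left; apply Rinv_0_lt_compat; lra]). lra. }
  set (t0 := LL N b / l).
  assert (Ht0 : 0 <= t0).
  { unfold t0, LL. assert (ln (1 - b/N) <= 0) by (rewrite <- ln_1; apply ln_le; lra).
    unfold Rdiv. apply Rmult_le_pos; [lra| left; apply Rinv_0_lt_compat; lra]. }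
  assert (Ht0a : t0 <= t_alpha N l alpha).
  { unfold t0, LL, t_alpha. assert (ln (1 - alpha/N) <= ln (1 - b/N)) by (apply ln_le; lra).
    assert (0 < / l) by (apply Rinv_0_lt_compat; lra).
    unfold Rdiv. nra. }
  assert (Hset : forall t, (0 <= t /\ viewcount N l lpu alpha t = b) <-> t = t0).
  { intro t; split.
    - intros [Ht Hv]. unfold viewcount in Hv.
      destruct (Rle_dec t (t_alpha N l alpha)) as [Hle|Hgt].
      + assert (He : exp (- l * t) = 1 - b / N).
        { rewrite <- Hv. field. lra. }
        assert (Hln : - l * t = ln (1 - b / N)) by (rewrite <- He, ln_exp; reflexivity).
        unfold t0, LL. rewrite <- Hln. field. lra.
      + exfalso. apply Rnot_le_lt in Hgt.
        assert (exp (- l * t) < exp (- l * t_alpha N l alpha)) by (apply exp_increasing; nra).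
        assert (Hea : exp (- l * t_alpha N l alpha) = 1 - alpha / N).
        { unfold t_alpha. replace (- l * (- / l * ln (1 - alpha / N))) with (ln (1 - alpha / N))
            by (field; lra). apply exp_ln; lra. }
        assert (N * (1 - exp (- l * t)) > alpha).
        { rewrite Hea in H. assert (N * (alpha / N) = alpha) by (field; lra). nra. }
        assert (lpu * (t - t_alpha N l alpha) > 0) by nra. lra.
    - intros ->. split; [exact Ht0|]. unfold viewcount.
      destruct (Rle_dec t0 (t_alpha N l alpha)) as [_|C]; [|contradiction].
      unfold t0, LL. replace (- l * (- ln (1 - b / N) / l)) with (ln (1 - b / N)) by (field; lra).
      rewrite exp_ln by lra. field; lra. }
  unfold t_beta.
  rewrite (is_glb_Rbar_unique _ (Finite t0)); [reflexivity|].
  split.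
  - intros x Hx'. apply Hset in Hx'. subst. simpl. lra.
  - intros bb Hbb. apply Hbb. apply Hset. reflexivity.
Qed.

Lemma LL_lt N b1 b2 : 0 < N -> 0 <= b1 -> b1 < b2 -> b2 < N -> LL N b1 < LL N b2.
Proof.
  intros HN H1 H12 H2. unfold LL.
  assert (b2 / N < 1) by (apply Rmult_lt_reg_r with N; [lra|]; field_simplify; lra).
  assert (b1 / N < b2 / N) by (unfold Rdiv; apply Rmult_lt_compat_r; [apply Rinv_0_lt_compat; lra| lra]).
  assert (ln (1 - b2/N) < ln (1 - b1/N)) by (apply ln_increasing; lra). lra.
Qed.

Theorem lemma2 (tau piG N lG lB lpu alpha : R)
  (Htau : 0 < tau) (HN : 0 < N) (Hlpu : 0 < lpu)
  (HlB : 0 < lB) (HlGB : lB < lG)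
  (HpiG : 0 <= piG) (HpiB : 0 < 1 - piG)
  (Ha0 : 0 <= alpha) (HaN : alpha < N) :
  let U := utility tau piG N lG lB lpu alpha in
  (piG / (1 - piG) < lG / lB ->
     forall beta, is_maximizer U alpha beta <-> beta = alpha) /\
  (piG / (1 - piG) > lG / lB ->
     forall beta, is_maximizer U alpha beta <-> beta = 0) /\
  (piG / (1 - piG) = lG / lB ->
     forall beta, 0 <= beta <= alpha -> is_maximizer U alpha beta).
Proof.
  intro U.
  set (c := (1 - piG) / lB - piG / lG).
  assert (HU : forall b, 0 <= b <= alpha ->
    U b = tau * (2 * piG - 1) + LL N b * c).
  { intros b [Hb0 Hb1]. unfold U, utility.
    rewrite !(t_beta_eq N _ lpu alpha b) by lra. unfold c. field. lra. }
  assert (Hc : c = ((1 - piG) * lG - piG * lB) / (lB * lG)) by (unfold c; field; lra).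
  assert (Hkey : piG / (1 - piG) - lG / lB = (piG * lB - (1 - piG) * lG) / ((1 - piG) * lB))
    by (field; lra).
  assert (Hpos : 0 < / (lB * lG)) by (apply Rinv_0_lt_compat; nra).
  assert (Hpos2 : 0 < / ((1 - piG) * lB)) by (apply Rinv_0_lt_compat; nra).
  assert (HLmono : forall b1 b2, 0 <= b1 -> b1 < b2 -> b2 <= alpha -> LL N b1 < LL N b2)
    by (intros; apply LL_lt; lra).
  split; [|split].
  - intros H. assert (Hcp : 0 < c).
    { rewrite Hc. unfold Rdiv in *.
      assert ((piG * lB - (1 - piG) * lG) * / ((1 - piG) * lB) < 0) by lra.
      assert (piG * lB - (1 - piG) * lG < 0) by nra. nra. }
    intros beta; split.
    + intros [[Hb0 Hb1] Hmax].
      destruct (Req_dec beta alpha) as [|Hne]; [assumption|].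
      exfalso. specialize (Hmax alpha ltac:(lra)).
      rewrite !HU in Hmax by lra.
      assert (LL N beta < LL N alpha) by (apply HLmono; lra). nra.
    + intros ->. split; [lra|]. intros b Hb. rewrite !HU by lra.
      destruct (Req_dec b alpha) as [->|Hne]; [lra|].
      assert (LL N b < LL N alpha) by (apply HLmono; lra). nra.
  - intros H. assert (Hcp : c < 0).
    { rewrite Hc. unfold Rdiv in *.
      assert ((piG * lB - (1 - piG) * lG) * / ((1 - piG) * lB) > 0) by lra.
      assert (piG * lB - (1 - piG) * lG > 0) by nra. nra. }
    intros beta; split.
    + intros [[Hb0 Hb1] Hmax].
      destruct (Req_dec beta 0) as [|Hne]; [assumption|].
      exfalso. specialize (Hmax 0 ltac:(lra)).
      rewrite !HU in Hmax by lra.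
      assert (LL N 0 < LL N beta) by (apply HLmono; lra). nra.
    + intros ->. split; [lra|]. intros b Hb. rewrite !HU by lra.
      destruct (Req_dec b 0) as [->|Hne]; [lra|].
      assert (LL N 0 < LL N b) by (apply HLmono; lra). nra.
  - intros H beta Hb. assert (Hc0 : c = 0).
    { rewrite Hc. unfold Rdiv in *.
      assert ((piG * lB - (1 - piG) * lG) * / ((1 - piG) * lB) = 0) by lra.
      assert (piG * lB - (1 - piG) * lG = 0).
      { apply Rmult_integral in H0. destruct H0; [assumption|]. lra. }
      replace ((1 - piG) * lG - piG * lB) with 0 by lra. ring. }
    split; [exact Hb|]. intros b Hb'. rewrite !HU by lra. rewrite Hc0. lra.
Qed.
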